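(* Let $D$ be a tournament missing disjoint paths of length 2 and let $C=a_1b_1c_1,\dots,a_kb_kc_k$ be a double cycle in $\Delta(D)$. Writing $v^-$ and $v^{++}$ for $N^-_{D[K(C)]}(v)$ and $N^{++}_{D[K(C)]}(v)$, for every $t\in\{1,\dots,k\}$ (indices modulo $k$): (1) if $c_t\notin a_t^-$, then $|a_t^{++}|=|a_t^-|$ when $b_{t+1}\in a_t^-$, and $|a_t^{++}|=|a_t^-|-1$ otherwise; (2) if $a_t\notin c_t^-$, then $|c_t^{++}|=|c_t^-|$ when $b_{t+1}\in c_t^-$, and $|c_t^{++}|=|c_t^-|-1$ otherwise; (3) $|b_t^{++}|=|b_t^-|+1$ when $b_{t+1}\in b_t^-$, and $|b_t^{++}|=|b_t^-|$ otherwise.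
   Context: All digraphs are finite oriented graphs; $D[X]$ is the induced subdigraph. $N^+_H(v)$, $N^-_H(v)$ are out/in-neighborhoods in $H$; $N^{++}_H(v)$ is the set of vertices $w\notin N_H^+(v)\cup\{v\}$ with $u\to w$ in $H$ for some $u\in N_H^+(v)$. A missing edge is a pair of distinct non-adjacent vertices; the missing graph is formed by the missing edges. $D$ is a tournament missing disjoint paths of length 2 if its missing graph is a vertex-disjoint union of paths each with exactly two edges. For missing edges $\{x,y\},\{a,b\}$, $\{x,y\}$ loses to $\{a,b\}$ (written $xy\to ab$) if the endpoints can be labelled so that $x\to a$, $b\notin N^+(x)\cup N^{++}(x)$, $y\to b$, $a\notin N^+(y)\cup N^{++}(y)$ (neighborhoods in $D$). $\Delta(D)$ has the missing edges as vertices and arcs $(e,e')$ whenever $e$ loses to $e'$. For missing paths $abc$, $xyz$, $abc\to xyz$ means each of $ab,bc$ loses to each of $xy,yz$. A double cycle is a sequence $C=a_1b_1c_1,\dots,a_kb_kc_k$ ($k\ge2$) of distinct missing paths of length 2 (components of the missing graph, edges $a_ib_i,b_ic_i$) with $a_ib_ic_i\to a_{i+1}b_{i+1}c_{i+1}$ for all $i$, indices modulo $k$. $K(C)=\{a_i,b_i,c_i:1\le i\le k\}$. *)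

(* Defs.v *)
From mathcomp Require Import all_boot.
Set Implicit Arguments. Unset Strict Implicit. Unset Printing Implicit Defensive.

(* A digraph on a finite vertex type T is a relation D : rel T (D u v = arc u -> v). *)
Section Digraphs.
Variables (T : finType) (D : rel T).

Definition oriented : Prop :=
  (forall x, ~~ D x x) /\ (forall x y, D x y -> ~~ D y x).

Definition Nout (v : T) : {set T} := [set w | D v w].
Definition Nin (v : T) : {set T} := [set u | D u v].
Definition N2 (v : T) : {set T} :=
  [set w | [&& (w \notin Nout v), w != v & [exists u, D v u && D u w]]].

Definition missing (x y : T) : bool := [&& x != y, ~~ D x y & ~~ D y x].

(* a b c is a component of the missing graph which is a path with edges ab, bc *)
Definition mpath (a b c : T) : Prop :=
  [/\ missing a b && missing b c, a != c,
      (forall z, missing a z -> z = b),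
      (forall z, missing c z -> z = b) &
      (forall z, missing b z -> (z = a \/ z = c))].

Definition tmdp : Prop :=
  oriented /\
  forall x y, missing x y ->
    exists a b c, mpath a b c /\ x \in [:: a; b; c] /\ y \in [:: a; b; c].

Definition loses_lab (x y a b : T) : bool :=
  [&& D x a, (b \notin Nout x :|: N2 x), D y b & (a \notin Nout y :|: N2 y)].

Definition loses (x y a b : T) : bool :=
  [|| loses_lab x y a b, loses_lab y x a b, loses_lab x y b a | loses_lab y x b a].

Definition ploses (a b c x y z : T) : bool :=
  [&& loses a b x y, loses a b y z, loses b c x y & loses b c y z].

Definition double_cycle (k : nat) (a b c : 'I_k -> T) : Prop :=
  [/\ 2 <= k,
      (forall t, mpath (a t) (b t) (c t)),
      (forall t s, t != s -> [set a t; b t; c t] != [set a s; b s; c s]) &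
      (forall t, ploses (a t) (b t) (c t) (a (ordS t)) (b (ordS t)) (c (ordS t)))].

End Digraphs.

Definition KC (T : finType) (k : nat) (a b c : 'I_k -> T) : {set T} :=
  [set x | [exists t, [|| x == a t, x == b t | x == c t]]].

Definition induced (T : finType) (D : rel T) (X : {set T}) : rel T :=
  fun x y => [&& x \in X, y \in X & D x y].

(* Main.v *)
Require Import Defs.
From mathcomp Require Import all_boot.
From mathcomp Require Import zify.
Set Implicit Arguments. Unset Strict Implicit. Unset Printing Implicit Defensive.

Section Basic.
Variables (T : finType) (D : rel T).
Hypothesis irr : forall x, ~~ D x x.
Hypothesis asym : forall x y, D x y -> ~~ D y x.

Lemma missingC x y : missing D x y = missing D y x.
Proof. by rewrite /missing eq_sym; case: (D x y); case: (D y x). Qed.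

Lemma tot x y : x != y -> ~~ missing D x y -> D x y || D y x.
Proof. by rewrite /missing => ->; case: (D x y); case: (D y x). Qed.

Definition NR s w := forall u, D s u -> ~~ D u w.

Lemma notN_NR x q : q \notin Nout D x :|: N2 D x -> NR x q.
Proof.
move=> H u Dxu; apply/negP=> Duq.
case: (eqVneq q x) => [E|ne]; first by subst; move: (asym Dxu); rewrite Duq.
move: H; rewrite !inE negb_or => /andP[nD]; rewrite nD ne /=.
by move/existsPn/(_ u); rewrite Dxu Duq.
Qed.

Lemma nout_of x q : q \notin Nout D x :|: N2 D x -> ~~ D x q.
Proof. by rewrite !inE negb_or => /andP[]. Qed.

Lemma loses_case x y p q :
  D x p || D p x -> D x q || D q x -> D y p || D p y -> D y q || D q y ->
  loses D x y p q ->
  (D p x /\ D y p /\ D q y /\ D x q /\ NR x p /\ NR y q) \/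
  (D p y /\ D x p /\ D q x /\ D y q /\ NR y p /\ NR x q).
Proof.
move=> txp txq typ tyq.
case/or4P => /and4P[d1 n1 d2 n2].
- right; have := nout_of n1; have := nout_of n2.
  move: txq typ => /orP[->|->] // /orP[->|->] //= _ _.
  by do ! split => //; apply: notN_NR.
- left; have := nout_of n1; have := nout_of n2.
  move: txp tyq => /orP[->|->] // /orP[->|->] //= _ _.
  by do ! split => //; apply: notN_NR.
- left; have := nout_of n1; have := nout_of n2.
  move: txp tyq => /orP[->|->] // /orP[->|->] //= _ _.
  by do ! split => //; apply: notN_NR.
- right; have := nout_of n1; have := nout_of n2.
  move: txq typ => /orP[->|->] // /orP[->|->] //= _ _.
  by do ! split => //; apply: notN_NR.
Qed.

Lemma losesC1 x y p q : loses D x y p q = loses D y x p q.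
Proof.
rewrite /loses.
by case: (loses_lab D x y p q); case: (loses_lab D y x p q);
   case: (loses_lab D x y q p); case: (loses_lab D y x q p).
Qed.

Lemma losesC2 x y p q : loses D x y p q = loses D x y q p.
Proof.
rewrite /loses.
by case: (loses_lab D x y p q); case: (loses_lab D y x p q);
   case: (loses_lab D x y q p); case: (loses_lab D y x q p).
Qed.

Lemma mpath_rev x y z : mpath D x y z -> mpath D z y x.
Proof.
case=> /andP[m1 m2] ne h1 h2 h3; split.
- by rewrite missingC andbC missingC m1 m2.
- by rewrite eq_sym.
- exact: h2.
- exact: h1.
- by move=> w /h3 [] ->; [right|left].
Qed.

End Basic.

Section Cycle.
Variables (T : finType) (D : rel T).
Hypothesis irr : forall x, ~~ D x x.
Hypothesis asym : forall x y, D x y -> ~~ D y x.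
Variables (k : nat) (a b c : 'I_k -> T).
Hypothesis mp : forall t, mpath D (a t) (b t) (c t).
Hypothesis dist : forall t s, t != s -> [set a t; b t; c t] != [set a s; b s; c s].
Hypothesis pl : forall t, ploses D (a t) (b t) (c t) (a (ordS t)) (b (ordS t)) (c (ordS t)).
Hypothesis k2 : 2 <= k.

Definition inP t x := [|| x == a t, x == b t | x == c t].

Lemma inPa t : inP t (a t). Proof. by rewrite /inP eqxx. Qed.
Lemma inPb t : inP t (b t). Proof. by rewrite /inP eqxx orbT. Qed.
Lemma inPc t : inP t (c t). Proof. by rewrite /inP eqxx !orbT. Qed.

Lemma inP_closed t x y : inP t y -> missing D x y -> inP t x.
Proof.
case: (mp t) => _ _ ha hc hb.
rewrite /inP => /or3P[]/eqP-> m.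
- by rewrite (ha x) ?eqxx ?orbT // missingC.
- by have [->|->] := hb x ltac:(by rewrite missingC); rewrite eqxx ?orbT.
- by rewrite (hc x) ?eqxx ?orbT // missingC.
Qed.

Lemma share t s x : inP t x -> inP s x -> forall y, inP t y -> inP s y.
Proof.
case: (mp t) => /andP[mab mbc] _ _ _ _ Px Psx.
have Pb : inP s (b t).
  move: Px; rewrite /inP => /or3P[]/eqP E; subst x.
  - by apply: (inP_closed Psx); rewrite missingC.
  - by [].
  - exact: (inP_closed Psx).
move=> y; rewrite /inP => /or3P[]/eqP->.
- exact: (inP_closed Pb).
- exact: Pb.
- by apply: (inP_closed Pb); rewrite missingC.
Qed.

Lemma ordS_neq (t : 'I_k) : ordS t != t.
Proof.
apply/eqP => /(congr1 val) /=.
have := ltn_ord t.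
case: (ltnP t.+1 k) => h1 h2.
  by rewrite modn_small //; lia.
have -> : t.+1 = k by lia.
rewrite modnn => E; lia.
Qed.

Lemma disj t x : inP t x -> inP (ordS t) x -> False.
Proof.
move=> P1 P2.
have := dist (ordS_neq t); rewrite eq_sym => /eqP; apply.
apply/setP => y; rewrite !inE; apply/idP/idP.
- by have := @share _ _ _ P1 P2 y; rewrite /inP -!orbA.
- by have := @share _ _ _ P2 P1 y; rewrite /inP -!orbA.
Qed.

Lemma far t x y : ~~ inP t x -> inP t y -> D x y || D y x.
Proof.
move=> nx Py; apply: tot.
  by apply: contraNneq nx => ->.
by apply/negP => /(inP_closed Py); apply/negP.
Qed.

Lemma far' t x y : ~~ inP t x -> inP t y -> ~~ D y x -> D x y.
Proof. by move=> nx Py; case/orP: (far nx Py) => // ->. Qed.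

Lemma cross t u w : inP t u -> inP (ordS t) w -> D u w || D w u.
Proof.
move=> Pu Pw; apply: (far (t := ordS t)) => //.
by apply/negP; exact: disj Pu.
Qed.

Ltac contra_asym := match goal with
  H1 : is_true (D ?x ?y), H2 : is_true (D ?y ?x) |- _ =>
    exfalso; move: (asym H1); rewrite H2 end.

Lemma caseAB t :
  let a' := a (ordS t) in let b' := b (ordS t) in let c' := c (ordS t) in
  (D b' (b t) /\ D (a t) b' /\ D (c t) b' /\ D a' (a t) /\ D (b t) a' /\
   D a' (c t) /\ D c' (a t) /\ D (b t) c' /\ D c' (c t) /\
   NR D (b t) b' /\ NR D (a t) a' /\ NR D (a t) c' /\ NR D (c t) a' /\ NR D (c t) c')
  \/
  (D (b t) b' /\ D b' (a t) /\ D b' (c t) /\ D (a t) a' /\ D a' (b t) /\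
   D (c t) a' /\ D c' (b t) /\ D (a t) c' /\ D (c t) c' /\
   NR D (a t) b' /\ NR D (c t) b' /\ NR D (b t) a' /\ NR D (b t) c').
Proof.
move=> a' b' c'.
have X := cross (inPa t) (inPa (ordS t)).
have := pl t; rewrite /ploses => /and4P[L1 L2 L3 L4].
have := loses_case asym (cross (inPa t) (inPa (ordS t))) (cross (inPa t) (inPb (ordS t)))
   (cross (inPb t) (inPa (ordS t))) (cross (inPb t) (inPb (ordS t))) L1.
have := loses_case asym (cross (inPa t) (inPb (ordS t))) (cross (inPa t) (inPc (ordS t)))
   (cross (inPb t) (inPb (ordS t))) (cross (inPb t) (inPc (ordS t))) L2.
have := loses_case asym (cross (inPb t) (inPa (ordS t))) (cross (inPb t) (inPb (ordS t)))
   (cross (inPc t) (inPa (ordS t))) (cross (inPc t) (inPb (ordS t))) L3.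
have := loses_case asym (cross (inPb t) (inPb (ordS t))) (cross (inPb t) (inPc (ordS t)))
   (cross (inPc t) (inPb (ordS t))) (cross (inPc t) (inPc (ordS t))) L4.
rewrite -/a' -/b' -/c'.
case=> [[h1 [h2 [h3 [h4 [h5 h6]]]]]|[h1 [h2 [h3 [h4 [h5 h6]]]]]];
case=> [[i1 [i2 [i3 [i4 [i5 i6]]]]]|[i1 [i2 [i3 [i4 [i5 i6]]]]]];
case=> [[j1 [j2 [j3 [j4 [j5 j6]]]]]|[j1 [j2 [j3 [j4 [j5 j6]]]]]];
case=> [[l1 [l2 [l3 [l4 [l5 l6]]]]]|[l1 [l2 [l3 [l4 [l5 l6]]]]]];
try (contra_asym; done).
- left; by do ! split.
- right; by do ! split.
Qed.


Definition ball x t := forall y, inP t y -> D x y.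

Lemma cover t y : inP t y -> exists w, [/\ inP (ordS t) w, D w y & NR D y w].
Proof.
have := caseAB t; cbv zeta.
case=> [[h1 [h2 [h3 [h4 [h5 [h6 [h7 [h8 [h9 [n1 [n2 [n3 [n4 n5]]]]]]]]]]]]]
       |[h1 [h2 [h3 [h4 [h5 [h6 [h7 [h8 [h9 [n1 [n2 [n3 n4]]]]]]]]]]]]];
rewrite /inP => /or3P[]/eqP->.
- by exists (a (ordS t)); split => //; exact: inPa.
- by exists (b (ordS t)); split => //; exact: inPb.
- by exists (c (ordS t)); split => //; exact: inPc.
- by exists (b (ordS t)); split => //; exact: inPb.
- by exists (a (ordS t)); split => //; exact: inPa.
- by exists (b (ordS t)); split => //; exact: inPb.
Qed.

Lemma step x t : ball x (ordS t) -> ball x t.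
Proof.
move=> B y Py.
case Px: (inP t x).
  have [w [Pw Dwx _]] := cover Px.
  by move: (asym Dwx); rewrite B.
have [w [Pw Dwy N]] := cover Py.
apply: (far' (negbT Px) Py); apply/negP => Dyx.
by move: (N _ Dyx); rewrite B.
Qed.

Lemma iterS n (s : 'I_k) : val (iter n (@ordS k) s) = (s + n) %% k.
Proof.
elim: n => [|n IH] /=; first by rewrite addn0 modn_small.
by rewrite IH addnS -addn1 modnDml addn1.
Qed.

Lemma reach (s t : 'I_k) : exists n, iter n (@ordS k) s = t.
Proof.
exists (t + k - s); apply/val_inj; rewrite iterS.
have -> : s + (t + k - s) = t + k by have := ltn_ord s; lia.
by rewrite modnDr modn_small.
Qed.

Lemma no_ball s x t : inP s x -> ~ ball x t.
Proof.
move=> Px; have [n <-] := reach s t.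
elim: n => [|n IH] /= B; first by move: (irr x); rewrite (B x Px).
exact: IH (step B).
Qed.

Notation K := (KC a b c).
Notation HK := (induced D (KC a b c)).

Lemma inK t x : inP t x -> x \in K.
Proof. by move=> P; rewrite inE; apply/existsP; exists t. Qed.

Lemma Kin x : x \in K -> exists t, inP t x.
Proof. by rewrite inE => /existsP. Qed.

Lemma NinE v w : (w \in Nin HK v) = [&& w \in K, v \in K & D w v].
Proof. by rewrite inE. Qed.

Lemma N2_char v w : v \in K -> w \in N2 HK v -> (w \in Nin HK v) \/ missing D v w.
Proof.
move=> Kv; rewrite {1}/N2 in_set => /and3P[no ne /existsP[u /andP[_ /and3P[_ Kw _]]]].
rewrite NinE Kw Kv /=.
move: no; rewrite /Nout in_set /induced Kv Kw /= => no.
case Dwv: (D w v); first by left.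
by right; rewrite /missing eq_sym ne no Dwv.
Qed.

Lemma N2_intro v u w : v \in K -> u \in K -> w \in K -> w != v -> ~~ D v w ->
  D v u -> D u w -> w \in N2 HK v.
Proof.
move=> Kv Ku Kw ne nD Dvu Duw.
rewrite /N2 inE; apply/and3P; split => //.
- by rewrite ?inE /induced Kv Kw.
- by apply/existsP; exists u; rewrite /induced Kv Ku Kw Dvu Duw.
Qed.

Lemma NR_notN2 v w : NR D v w -> w \notin N2 HK v.
Proof.
move=> N; rewrite /N2 inE; apply/negP => /and3P[_ _ /existsP[u /andP[H1 H2]]].
move: H1 H2; rewrite /induced => /and3P[_ _ Dvu] /and3P[_ _ Duw].
by move: (N u Dvu); rewrite Duw.
Qed.

Lemma no2 v w : v \in K -> w \in K -> D w v -> w \notin N2 HK v ->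
  forall s u, inP s u -> ~~ inP s w -> D v u -> D w u.
Proof.
move=> Kv Kw Dwv nN s u Pu nPw Dvu.
apply: (far' nPw Pu); apply/negP => Duw.
move/negP: nN; apply.
have Ku := inK Pu.
apply: (N2_intro Kv Ku Kw) => //.
- by apply/eqP => E; move: Dwv; rewrite E => Dvv; move: (irr v); rewrite Dvv.
- by apply: asym.
Qed.

Lemma via s w y u : ~~ inP s w -> inP s y -> NR D y u -> D w u -> D w y.
Proof.
move=> nP Py N Dwu; apply: (far' nP Py); apply/negP => Dyw.
by move: (N _ Dyw); rewrite Dwu.
Qed.

Lemma core_a t w : D (a t) (c t) -> w \in Nin HK (a t) -> ~~ inP t w ->
  ~~ inP (ordS t) w -> w \in N2 HK (a t).
Proof.
move=> Dac; rewrite NinE => /and3P[Kw Ka Dwa] n1 n2.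
apply/negPn/negP => nN.
have h := no2 Ka Kw Dwa nN.
have Dwc := h _ _ (inPc t) n1 Dac.
have [s Ps] := Kin Kw.
apply: (no_ball Ps (t := t)) => y; rewrite /inP => /or3P[]/eqP-> //.
have := caseAB t; cbv zeta.
case=> [[h1 [h2 [h3 [h4 [h5 [h6 [h7 [h8 [h9 [m1 [m2 [m3 [m4 m5]]]]]]]]]]]]]
       |[h1 [h2 [h3 [h4 [h5 [h6 [h7 [h8 [h9 [m1 [m2 [m3 m4]]]]]]]]]]]]].
- apply: (via n1 (inPb t) m1); exact: h _ _ (inPb (ordS t)) n2 h2.
- apply: (via n1 (inPb t) m3); exact: h _ _ (inPa (ordS t)) n2 h4.
Qed.

Lemma core_b t w : w \in Nin HK (b t) -> ~~ inP t w ->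
  ~~ inP (ordS t) w -> w \in N2 HK (b t).
Proof.
rewrite NinE => /and3P[Kw Kb Dwb] n1 n2.
apply/negPn/negP => nN.
have h := no2 Kb Kw Dwb nN.
have [s Ps] := Kin Kw.
apply: (no_ball Ps (t := t)) => y; rewrite /inP => /or3P[]/eqP-> //;
have := caseAB t; cbv zeta;
case=> [[h1 [h2 [h3 [h4 [h5 [h6 [h7 [h8 [h9 [m1 [m2 [m3 [m4 m5]]]]]]]]]]]]]
       |[h1 [h2 [h3 [h4 [h5 [h6 [h7 [h8 [h9 [m1 [m2 [m3 m4]]]]]]]]]]]]].
- apply: (via n1 (inPa t) m2); exact: h _ _ (inPa (ordS t)) n2 h5.
- apply: (via n1 (inPa t) m1); exact: h _ _ (inPb (ordS t)) n2 h1.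
- apply: (via n1 (inPc t) m4); exact: h _ _ (inPa (ordS t)) n2 h5.
- apply: (via n1 (inPc t) m2); exact: h _ _ (inPb (ordS t)) n2 h1.
Qed.

Lemma claim_a t : c t \notin Nin HK (a t) ->
  (if b (ordS t) \in Nin HK (a t)
   then #|N2 HK (a t)| = #|Nin HK (a t)|
   else #|N2 HK (a t)| + 1 = #|Nin HK (a t)|).
Proof.
have Ka := inK (inPa t); have Kb := inK (inPb t); have Kc := inK (inPc t).
have Ka' := inK (inPa (ordS t)); have Kb' := inK (inPb (ordS t)).
have Kc' := inK (inPc (ordS t)).
case: (mp t) => /andP[mab mbc] neac hA hC hB.
case: (mp (ordS t)) => _ neac' _ _ _.
rewrite NinE Kc Ka /= => nca.
have nm : ~~ missing D (a t) (c t).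
  by apply/negP => /hA E; move: mbc; rewrite -E /missing eqxx.
have Dac : D (a t) (c t).
  by case/orP: (tot neac nm) => // h; rewrite h in nca.
have nDba : ~~ D (b t) (a t) by move: mab; rewrite /missing => /and3P[].
have bnot : b t \notin Nin HK (a t) by rewrite NinE (negbTE nDba) !andbF.
have Nin_core : forall w, w \in Nin HK (a t) -> ~~ inP (ordS t) w -> w \in N2 HK (a t).
  move=> w Nw n2; apply: core_a => //.
  move: Nw; rewrite NinE => /and3P[_ _ Dwa].
  rewrite /inP; apply/negP => /or3P[]/eqP E; subst w.
  - by move: (irr (a t)); rewrite Dwa.
  - by rewrite Dwa in nDba.
  - by rewrite Dwa in nca.
have N2_sub : forall w, w \in N2 HK (a t) -> (w == b t) || (w \in Nin HK (a t)).
  move=> w /(N2_char Ka) [->|m]; first by rewrite orbT.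
  by rewrite (hA w m) eqxx.
have := caseAB t; cbv zeta.
case=> [[h1 [h2 [h3 [h4 [h5 [h6 [h7 [h8 [h9 [m1 [m2 [m3 [m4 m5]]]]]]]]]]]]]
       |[h1 [h2 [h3 [h4 [h5 [h6 [h7 [h8 [h9 [m1 [m2 [m3 m4]]]]]]]]]]]]].
-
  have b'not : b (ordS t) \notin Nin HK (a t).
    by rewrite NinE (negbTE (asym h2)) !andbF.
  rewrite (negbTE b'not).
  set X := Nin HK (a t) :&: N2 HK (a t).
  have eNin : Nin HK (a t) = a (ordS t) |: (c (ordS t) |: X).
    apply/setP => w; rewrite !in_setU1 in_setI; apply/idP/idP.
    + move=> Nw; case: (eqVneq w (a (ordS t))) => [//|n1].
      case: (eqVneq w (c (ordS t))) => [//|n2] /=.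
      rewrite Nw Nin_core //.
      rewrite /inP (negbTE n1) (negbTE n2) /= orbF.
      by apply/eqP => E; subst w; rewrite Nw in b'not.
    + case/orP => [/eqP->|/orP[/eqP->|/andP[]//]].
      * by rewrite NinE Ka' Ka h4.
      * by rewrite NinE Kc' Ka h7.
  have eN2 : N2 HK (a t) = b t |: X.
    apply/setP => w; rewrite in_setU1 in_setI; apply/idP/idP.
    + move=> Nw; rewrite Nw andbT; exact: N2_sub.
    + case/orP => [/eqP->|/andP[]//].
      apply: (N2_intro Ka Kb' Kb) => //.
      by move: mab; rewrite /missing eq_sym => /and3P[].
      by move: mab; rewrite /missing => /and3P[].
  rewrite eNin eN2 !cardsU1 /X in_setU1 !in_setI (negbTE bnot) (negbTE (NR_notN2 m2)).
  by rewrite (negbTE (NR_notN2 m3)) (negbTE neac') !andbF /= addn1 add1n.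
-
  have b'in : b (ordS t) \in Nin HK (a t) by rewrite NinE Kb' Ka h2.
  rewrite b'in.
  set X := Nin HK (a t) :&: N2 HK (a t).
  have eNin : Nin HK (a t) = b (ordS t) |: X.
    apply/setP => w; rewrite !in_setU1 in_setI; apply/idP/idP.
    + move=> Nw; case: (eqVneq w (b (ordS t))) => [//|n1] /=.
      rewrite Nw Nin_core //.
      rewrite /inP (negbTE n1) /=.
      move: Nw; rewrite NinE => /and3P[_ _ Dwa].
      apply/negP => /orP[]/eqP E; subst w.
      * by move: (asym h4); rewrite Dwa.
      * by move: (asym h8); rewrite Dwa.
    + by case/orP => [/eqP->|/andP[]//].
  have eN2 : N2 HK (a t) = b t |: X.
    apply/setP => w; rewrite in_setU1 in_setI; apply/idP/idP.
    + move=> Nw; rewrite Nw andbT; exact: N2_sub.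
    + case/orP => [/eqP->|/andP[]//].
      apply: (N2_intro Ka Ka' Kb) => //.
      by move: mab; rewrite /missing eq_sym => /and3P[].
      by move: mab; rewrite /missing => /and3P[].
  by rewrite eNin eN2 !cardsU1 /X !in_setI (negbTE bnot) (negbTE (NR_notN2 m1)) !andbF.
Qed.

Lemma claim_b t :
  (if b (ordS t) \in Nin HK (b t)
   then #|N2 HK (b t)| = #|Nin HK (b t)| + 1
   else #|N2 HK (b t)| = #|Nin HK (b t)|).
Proof.
have Ka := inK (inPa t); have Kb := inK (inPb t); have Kc := inK (inPc t).
have Ka' := inK (inPa (ordS t)); have Kb' := inK (inPb (ordS t)).
have Kc' := inK (inPc (ordS t)).
case: (mp t) => /andP[mab mbc] neac hA hC hB.
case: (mp (ordS t)) => _ neac' _ _ _.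
have nDab : ~~ D (a t) (b t) by move: mab; rewrite /missing => /and3P[].
have nDcb : ~~ D (c t) (b t) by move: mbc; rewrite /missing => /and3P[].
have nab : a t != b t by move: mab; rewrite /missing => /and3P[].
have ncb : c t != b t by move: mbc; rewrite /missing eq_sym => /and3P[].
have nDba : ~~ D (b t) (a t) by move: mab; rewrite /missing => /and3P[].
have nDbc : ~~ D (b t) (c t) by move: mbc; rewrite /missing => /and3P[].
have anot : a t \notin Nin HK (b t) by rewrite NinE (negbTE nDab) !andbF.
have cnot : c t \notin Nin HK (b t) by rewrite NinE (negbTE nDcb) !andbF.
have Nin_core : forall w, w \in Nin HK (b t) -> ~~ inP (ordS t) w -> w \in N2 HK (b t).
  move=> w Nw n2; apply: core_b => //.
  move: Nw; rewrite NinE => /and3P[_ _ Dwb].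
  rewrite /inP; apply/negP => /or3P[]/eqP E; subst w.
  - by rewrite Dwb in nDab.
  - by move: (irr (b t)); rewrite Dwb.
  - by rewrite Dwb in nDcb.
have N2_sub : forall w, w \in N2 HK (b t) ->
    [|| w == a t, w == c t | w \in Nin HK (b t)].
  move=> w /(N2_char Kb) [->|m]; first by rewrite !orbT.
  by case: (hB w m) => ->; rewrite eqxx ?orbT.
have := caseAB t; cbv zeta.
case=> [[h1 [h2 [h3 [h4 [h5 [h6 [h7 [h8 [h9 [m1 [m2 [m3 [m4 m5]]]]]]]]]]]]]
       |[h1 [h2 [h3 [h4 [h5 [h6 [h7 [h8 [h9 [m1 [m2 [m3 m4]]]]]]]]]]]]].
-
  have b'in : b (ordS t) \in Nin HK (b t) by rewrite NinE Kb' Kb h1.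
  rewrite b'in.
  set X := Nin HK (b t) :&: N2 HK (b t).
  have eNin : Nin HK (b t) = b (ordS t) |: X.
    apply/setP => w; rewrite !in_setU1 in_setI; apply/idP/idP.
    + move=> Nw; case: (eqVneq w (b (ordS t))) => [//|n1] /=.
      rewrite Nw Nin_core //.
      rewrite /inP (negbTE n1) /=.
      move: Nw; rewrite NinE => /and3P[_ _ Dwb].
      apply/negP => /orP[]/eqP E; subst w.
      * by move: (asym h5); rewrite Dwb.
      * by move: (asym h8); rewrite Dwb.
    + by case/orP => [/eqP->|/andP[]//].
  have eN2 : N2 HK (b t) = a t |: (c t |: X).
    apply/setP => w; rewrite !in_setU1 in_setI; apply/idP/idP.
    + move=> Nw; rewrite Nw andbT; exact: N2_sub.
    + case/orP => [/eqP->|/orP[/eqP->|/andP[]//]].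
      * exact: (N2_intro Kb Ka' Ka nab nDba h5 h4).
      * exact: (N2_intro Kb Ka' Kc ncb nDbc h5 h6).
  by rewrite eNin eN2 !cardsU1 /X !in_setU1 !in_setI (negbTE neac) (negbTE anot)
    (negbTE cnot) (negbTE (NR_notN2 m1)) !andbF /= addn1 add1n.
-
  have b'not : b (ordS t) \notin Nin HK (b t).
    by rewrite NinE (negbTE (asym h1)) !andbF.
  rewrite (negbTE b'not).
  set X := Nin HK (b t) :&: N2 HK (b t).
  have eNin : Nin HK (b t) = a (ordS t) |: (c (ordS t) |: X).
    apply/setP => w; rewrite !in_setU1 in_setI; apply/idP/idP.
    + move=> Nw; case: (eqVneq w (a (ordS t))) => [//|n1].
      case: (eqVneq w (c (ordS t))) => [//|n2] /=.
      rewrite Nw Nin_core //.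
      rewrite /inP (negbTE n1) (negbTE n2) /= orbF.
      by apply/eqP => E; subst w; rewrite Nw in b'not.
    + case/orP => [/eqP->|/orP[/eqP->|/andP[]//]].
      * by rewrite NinE Ka' Kb h5.
      * by rewrite NinE Kc' Kb h7.
  have eN2 : N2 HK (b t) = a t |: (c t |: X).
    apply/setP => w; rewrite !in_setU1 in_setI; apply/idP/idP.
    + move=> Nw; rewrite Nw andbT; exact: N2_sub.
    + case/orP => [/eqP->|/orP[/eqP->|/andP[]//]].
      * exact: (N2_intro Kb Kb' Ka nab nDba h1 h2).
      * exact: (N2_intro Kb Kb' Kc ncb nDbc h1 h3).
  by rewrite eNin eN2 !cardsU1 /X !in_setU1 !in_setI (negbTE neac) (negbTE anot)
    (negbTE cnot) (negbTE (NR_notN2 m3)) (negbTE (NR_notN2 m4)) (negbTE neac') !andbF.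
Qed.
End Cycle.

Lemma set3C (T : finType) (x y z : T) : [set x; y; z] = [set z; y; x].
Proof.
apply/setP => w; rewrite !inE.
by case: (w == x); case: (w == y); case: (w == z).
Qed.

Lemma KC_rev (T : finType) (k : nat) (a b c : 'I_k -> T) : KC c b a = KC a b c.
Proof.
apply/setP => x; rewrite !inE; apply/existsP/existsP => -[s hs]; exists s; move: hs;
by case: (x == a s); case: (x == b s); case: (x == c s).
Qed.

Theorem mainTheorem18 (T : finType) (D : rel T) (k : nat) (a b c : 'I_k -> T) :
  tmdp D -> double_cycle D a b c ->
  let H := induced D (KC a b c) in
  forall t : 'I_k,
    [/\ c t \notin Nin H (a t) ->
          (if b (ordS t) \in Nin H (a t)
           then #|N2 H (a t)| = #|Nin H (a t)|
           else #|N2 H (a t)| + 1 = #|Nin H (a t)|),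
        a t \notin Nin H (c t) ->
          (if b (ordS t) \in Nin H (c t)
           then #|N2 H (c t)| = #|Nin H (c t)|
           else #|N2 H (c t)| + 1 = #|Nin H (c t)|) &
        (if b (ordS t) \in Nin H (b t)
         then #|N2 H (b t)| = #|Nin H (b t)| + 1
         else #|N2 H (b t)| = #|Nin H (b t)|)].
Proof.
move=> [[irr asym] _] [k2 mp dist pl] H t.
have mp' : forall t, mpath D (c t) (b t) (a t) by move=> s; exact: mpath_rev.
have dist' : forall t s, t != s -> [set c t; b t; a t] != [set c s; b s; a s].
  by move=> s r /dist; rewrite !(set3C (c _)).
have pl' : forall t, ploses D (c t) (b t) (a t) (c (ordS t)) (b (ordS t)) (a (ordS t)).
  move=> s; move: (pl s); rewrite /ploses => /and4P[h1 h2 h3 h4].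
  by apply/and4P; split; rewrite losesC1 losesC2.
split.
- exact: (claim_a irr asym mp dist pl k2).
- have := claim_a irr asym mp' dist' pl' k2 (t:=t); rewrite KC_rev; exact.
- exact: (claim_b irr asym mp dist pl k2 t).
Qed.
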